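(* Let $\pi\in\mathfrak M'_S$, put $V_0=\mathrm{Im}(\pi)$, let $i,j\in V_0$ be orthonormal, $k=i\times j$, let $\ell\in V_0^\perp$ be a unit vector, and set $v_0=\ell$, $v_1=i\times\ell$, $v_2=j\times\ell$, $v_3=k\times\ell$. Then for any $(a_0,a_1,a_2,a_3),(b_0,b_1,b_2,b_3)\in\mathbb R^4$ there is a unique $d\in T_\pi(\mathfrak M'_S)$ with $d(i)=\sum_{r=0}^3 a_rv_r$ and $d(j)=\sum_{r=0}^3 b_rv_r$. Consequently $\dim T_\pi(\mathfrak M'_S)=8$. Moreover, $T_\pi(\mathfrak M'_S)$ is a Lie triple subsystem of $T_\pi(\mathrm{Gr}_3(\mathbb R^7))$ (with triple product $[[d_1,d_2],d_3]$).
   Context: Let $\langle\cdot,\cdot\rangle$ be the standard inner product on $\mathbb R^7$ and $\times$ the cross product on $\mathbb R^7$ determined by $e_i\times e_{i+1}=e_{i+3}$, $e_{i+1}\times e_{i+3}=e_i$, $e_{i+3}\times e_i=e_{i+1}$ (indices mod 7, anticommutative, bilinear). Let $\Omega(x,y,z)=\langle x\times y,z\rangle$. $\mathrm{Gr}_3(\mathbb R^7)=\{\pi\in\mathrm{End}(\mathbb R^7):\pi^2=\pi,\ \pi^\sharp=\pi,\ \mathrm{tr}\,\pi=3\}$ ($\sharp$ = adjoint w.r.t. $\langle\cdot,\cdot\rangle$), and $\mathfrak M'_S=\{\pi\in\mathrm{Gr}_3(\mathbb R^7):\ \Omega(\pi x,\pi y,(1-\pi)z)=0\ \forall x,y,z\}$,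 equivalently the orthogonal projections onto $3$-dimensional subspaces $V$ with $V\times V\subseteq V$. $T_\pi(\mathrm{Gr}_3(\mathbb R^7))=\{d\in\mathrm{End}(\mathbb R^7): d\pi+\pi d=d,\ d^\sharp=d,\ \mathrm{tr}\,d=0\}$, and $T_\pi(\mathfrak M'_S)=\{d\in T_\pi(\mathrm{Gr}_3(\mathbb R^7)):\ d(x\times y)=d(x)\times y+x\times d(y)\ \forall x,y\in\mathrm{Im}(\pi)\}$. *)

(* Defs.v *)
(* R^7 is modelled by column vectors 'cV[R]_7 over a real
   field R, End(R^7) by 'M[R]_7 acting by d x := d *m x. *)
From HB Require Import structures.
From mathcomp Require Import all_boot all_order all_algebra.
Set Implicit Arguments. Unset Strict Implicit. Unset Printing Implicit Defensive.
Import Order.TTheory GRing.Theory Num.Theory.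
Local Open Scope ring_scope.

Section G2.
Variable R : realFieldType.

Definition sh (i : 'I_7) (k : nat) : 'I_7 := inord ((i + k) %% 7).

Definition ev (a : 'I_7) : 'cV[R]_7 := delta_mx a 0.

(* e_a x e_b, from e_i x e_{i+1} = e_{i+3}, e_{i+1} x e_{i+3} = e_i,
   e_{i+3} x e_i = e_{i+1} and anticommutativity *)
Definition cross_basis (a b : 'I_7) : 'cV[R]_7 :=
  \sum_(i < 7)
    ( ((a == i) && (b == sh i 1))%:R *: ev (sh i 3)
    + ((a == sh i 1) && (b == sh i 3))%:R *: ev i
    + ((a == sh i 3) && (b == i))%:R *: ev (sh i 1)
    - ((b == i) && (a == sh i 1))%:R *: ev (sh i 3)
    - ((b == sh i 1) && (a == sh i 3))%:R *: ev i
    - ((b == sh i 3) && (a == i))%:R *: ev (sh i 1)).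

Definition cross (x y : 'cV[R]_7) : 'cV[R]_7 :=
  \sum_(a < 7) \sum_(b < 7) (x a 0 * y b 0) *: cross_basis a b.

Definition innp (x y : 'cV[R]_7) : R := \sum_(a < 7) x a 0 * y a 0.

Definition Omega (x y z : 'cV[R]_7) : R := innp (cross x y) z.

(* adjoint w.r.t. the standard inner product is the transpose *)
Definition inGr3 (pi : 'M[R]_7) : Prop :=
  pi *m pi = pi /\ pi^T = pi /\ \tr pi = 3%:R.

Definition inMS' (pi : 'M[R]_7) : Prop :=
  inGr3 pi /\
  forall x y z : 'cV[R]_7, Omega (pi *m x) (pi *m y) ((1%:M - pi) *m z) = 0.

Definition inIm (pi : 'M[R]_7) (x : 'cV[R]_7) : Prop :=
  exists y : 'cV[R]_7, x = pi *m y.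

Definition inTGr (pi d : 'M[R]_7) : Prop :=
  d *m pi + pi *m d = d /\ d^T = d /\ \tr d = 0.

Definition inTMS' (pi d : 'M[R]_7) : Prop :=
  inTGr pi d /\
  forall x y : 'cV[R]_7, inIm pi x -> inIm pi y ->
    d *m cross x y = cross (d *m x) y + cross x (d *m y).

Definition brk (d1 d2 : 'M[R]_7) : 'M[R]_7 := d1 *m d2 - d2 *m d1.

End G2.

(* Main.v *)
Require Import Defs.
From HB Require Import structures.
From mathcomp Require Import all_boot all_order all_algebra.
From mathcomp Require Import ring lra.
Import Order.TTheory GRing.Theory Num.Theory.
Local Open Scope ring_scope.
Set Implicit Arguments. Unset Strict Implicit.

Section Base.
Variable R : realFieldType.
Implicit Types x y z w : 'cV[R]_7.

Lemma sum7 (V : zmodType) (F : 'I_7 -> V) :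
  \sum_(i < 7) F i = F (inord 0) + F (inord 1) + F (inord 2) + F (inord 3)
    + F (inord 4) + F (inord 5) + F (inord 6).
Proof.
rewrite !big_ord_recl big_ord0 addr0 !addrA.
by repeat congr (_ + _); congr F; apply: val_inj; rewrite /= inordK.
Qed.

Definition s1 (n : nat) : nat :=
  match n with 0 => 1 | 1 => 2 | 2 => 3 | 3 => 4 | 4 => 5 | 5 => 6 | _ => 0 end%N.
Definition s3 (n : nat) : nat :=
  match n with 0 => 3 | 1 => 4 | 2 => 5 | 3 => 6 | 4 => 0 | 5 => 1 | _ => 2 end%N.

Lemma sh1 n : (n < 7)%N -> sh (inord n) 1 = inord (s1 n).
Proof.
by case: n => [|[|[|[|[|[|[|n]]]]]]] //= _; apply: val_inj; rewrite /sh /= !inordK.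
Qed.
Lemma sh3 n : (n < 7)%N -> sh (inord n) 3 = inord (s3 n).
Proof.
by case: n => [|[|[|[|[|[|[|n]]]]]]] //= _; apply: val_inj; rewrite /sh /= !inordK.
Qed.

Lemma inord_eq (m n : nat) : (m < 7)%N -> (n < 7)%N ->
  ((inord m : 'I_7) == inord n) = (m == n).
Proof. by move=> hm hn; rewrite -val_eqE /= !inordK. Qed.

Lemma sum2_pick (f : 'I_7 -> 'I_7 -> R) (p q : 'I_7) (v : 'cV[R]_7) :
  \sum_(a < 7) \sum_(b < 7) f a b *: (((a == p) && (b == q))%:R *: v) = f p q *: v.
Proof.
rewrite (bigD1 p) //= [\sum_(i < 7 | i != p) _]big1 ?addr0; last first.
  move=> a hap; rewrite big1 // => b _.
  by rewrite (negbTE hap) /= scale0r scaler0.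
rewrite (bigD1 q) //= [\sum_(i < 7 | i != q) _]big1 ?addr0; last first.
  by move=> b hbq; rewrite (negbTE hbq) andbF scale0r scaler0.
by rewrite !eqxx scale1r.
Qed.

Lemma sum2_pick' (f : 'I_7 -> 'I_7 -> R) (p q : 'I_7) (v : 'cV[R]_7) :
  \sum_(a < 7) \sum_(b < 7) f a b *: (((b == q) && (a == p))%:R *: v) = f p q *: v.
Proof.
rewrite -(sum2_pick f p q v); apply: eq_bigr => a _; apply: eq_bigr => b _.
by rewrite andbC.
Qed.

Lemma sum2D (F G : 'I_7 -> 'I_7 -> 'cV[R]_7) :
  \sum_(a < 7) \sum_(b < 7) (F a b + G a b) =
  \sum_(a < 7) \sum_(b < 7) F a b + \sum_(a < 7) \sum_(b < 7) G a b.
Proof. by rewrite -big_split; apply: eq_bigr => a _; rewrite big_split. Qed.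
Lemma sum2B (F G : 'I_7 -> 'I_7 -> 'cV[R]_7) :
  \sum_(a < 7) \sum_(b < 7) (F a b - G a b) =
  \sum_(a < 7) \sum_(b < 7) F a b - \sum_(a < 7) \sum_(b < 7) G a b.
Proof. by rewrite -sumrB; apply: eq_bigr => a _; rewrite sumrB. Qed.

Lemma sum2N (F : 'I_7 -> 'I_7 -> 'cV[R]_7) :
  \sum_(a < 7) \sum_(b < 7) - F a b = - \sum_(a < 7) \sum_(b < 7) F a b.
Proof. by rewrite -sumrN; apply: eq_bigr => a _; rewrite sumrN. Qed.

Lemma cross_lines x y : cross x y = \sum_(i < 7)
  ( (x i 0 * y (sh i 1) 0 - x (sh i 1) 0 * y i 0) *: ev R (sh i 3)
  + (x (sh i 1) 0 * y (sh i 3) 0 - x (sh i 3) 0 * y (sh i 1) 0) *: ev R i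
  + (x (sh i 3) 0 * y i 0 - x i 0 * y (sh i 3) 0) *: ev R (sh i 1)).
Proof.
rewrite /cross /cross_basis.
under eq_bigr => a _ do under eq_bigr => b _ do rewrite scaler_sumr.
under eq_bigr => a _ do rewrite exchange_big.
rewrite exchange_big; apply: eq_bigr => i _.
under eq_bigr => a _ do under eq_bigr => b _ do rewrite !scalerDr !scalerN.
rewrite !sum2D !sum2N.
rewrite !sum2_pick !sum2_pick'.
by apply/matrixP => r c; rewrite !mxE; ring.
Qed.

Definition cxf (X Y : nat -> R) (c : nat) : R :=
  match c with
  | 0 => X 1%N * Y 3%N + X 2%N * Y 6%N + X 4%N * Y 5%N - X 3%N * Y 1%N - X 6%N * Y 2%N - X 5%N * Y 4%N
  | 1 => X 2%N * Y 4%N + X 3%N * Y 0%N + X 5%N * Y 6%N - X 4%N * Y 2%N - X 0%N * Y 3%N - X 6%N * Y 5%N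
  | 2 => X 3%N * Y 5%N + X 4%N * Y 1%N + X 6%N * Y 0%N - X 5%N * Y 3%N - X 1%N * Y 4%N - X 0%N * Y 6%N
  | 3 => X 0%N * Y 1%N + X 4%N * Y 6%N + X 5%N * Y 2%N - X 1%N * Y 0%N - X 6%N * Y 4%N - X 2%N * Y 5%N
  | 4 => X 1%N * Y 2%N + X 5%N * Y 0%N + X 6%N * Y 3%N - X 2%N * Y 1%N - X 0%N * Y 5%N - X 3%N * Y 6%N
  | 5 => X 0%N * Y 4%N + X 2%N * Y 3%N + X 6%N * Y 1%N - X 4%N * Y 0%N - X 3%N * Y 2%N - X 1%N * Y 6%N
  | _ => X 0%N * Y 2%N + X 1%N * Y 5%N + X 3%N * Y 4%N - X 2%N * Y 0%N - X 5%N * Y 1%N - X 4%N * Y 3%N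
  end.

Lemma crossEn x y n : (n < 7)%N ->
  (cross x y) (inord n) 0 = cxf (fun m => x (inord m) 0) (fun m => y (inord m) 0) n.
Proof.
move=> hn; rewrite cross_lines summxE sum7 !sh1 // !sh3 //= /ev !mxE.
rewrite !inord_eq //=.
by case: n hn => [|[|[|[|[|[|[|n]]]]]]] //= _; ring.
Qed.

Lemma colP7 (u v : 'cV[R]_7) :
  (forall n, (n < 7)%N -> u (inord n) 0 = v (inord n) 0) -> u = v.
Proof.
move=> H; apply/matrixP => a b; rewrite ord1.
by have := H a (ltn_ord a); rewrite inord_val.
Qed.

Lemma innpE x y : innp x y = x (inord 0) 0 * y (inord 0) 0 + x (inord 1) 0 * y (inord 1) 0
  + x (inord 2) 0 * y (inord 2) 0 + x (inord 3) 0 * y (inord 3) 0 + x (inord 4) 0 * y (inord 4) 0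
  + x (inord 5) 0 * y (inord 5) 0 + x (inord 6) 0 * y (inord 6) 0.
Proof. by rewrite /innp sum7. Qed.

Ltac cx7 := let n := fresh "n" in let hn := fresh "hn" in
  apply: colP7 => n hn; case: n hn => [|[|[|[|[|[|[|n]]]]]]] //= _;
  rewrite ?innpE; repeat (rewrite ?mxE crossEn //=); rewrite ?mxE ?innpE.

Lemma crossC x y : cross x y = - cross y x.
Proof. cx7; ring. Qed.
Lemma crossDl x y z : cross (x + y) z = cross x z + cross y z.
Proof. cx7; ring. Qed.
Lemma crossDr x y z : cross z (x + y) = cross z x + cross z y.
Proof. cx7; ring. Qed.
Lemma crossZl (a : R) x y : cross (a *: x) y = a *: cross x y.
Proof. cx7; ring. Qed.
Lemma crossZr (a : R) x y : cross x (a *: y) = a *: cross x y.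
Proof. cx7; ring. Qed.
Lemma innp_cyc x y z : innp (cross x y) z = innp (cross y z) x.
Proof. rewrite !innpE; repeat (rewrite crossEn //=); ring. Qed.
Lemma cross3 x y z : cross x (cross y z) =
  - cross (cross x y) z + (2 * innp x z) *: y - innp y z *: x - innp x y *: z.
Proof. Time (cx7; ring). Qed.
Lemma gramP x y z : innp (cross x y) (cross z y) = innp x z * innp y y - innp x y * innp z y.
Proof. rewrite !innpE; repeat (rewrite crossEn //=); ring. Qed.

Lemma crossxx x : cross x x = 0 :> 'cV[R]_7.
Proof. cx7; ring. Qed.
Lemma crossxxy x y : cross x (cross x y) = innp x y *: x - innp x x *: y.
Proof. cx7; ring. Qed.
Lemma cross0l x : cross 0 x = 0 :> 'cV[R]_7.
Proof. cx7; ring. Qed.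
Lemma cross0r x : cross x 0 = 0 :> 'cV[R]_7.
Proof. cx7; ring. Qed.
Lemma crossNl x y : cross (- x) y = - cross x y.
Proof. cx7; ring. Qed.
Lemma crossNr x y : cross x (- y) = - cross x y.
Proof. cx7; ring. Qed.
Lemma crossBl x y z : cross (x - y) z = cross x z - cross y z.
Proof. cx7; ring. Qed.
Lemma crossBr x y z : cross z (x - y) = cross z x - cross z y.
Proof. cx7; ring. Qed.

End Base.

Section Lin.
Variable R : realFieldType.
Implicit Types x y z w u : 'cV[R]_7.

Lemma innpC x y : innp x y = innp y x.
Proof. by apply: eq_bigr => a _; rewrite mulrC. Qed.
Lemma innpDl x y z : innp (x + y) z = innp x z + innp y z.
Proof. rewrite !innpE !mxE; ring. Qed.
Lemma innpDr x y z : innp z (x + y) = innp z x + innp z y.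
Proof. rewrite !innpE !mxE; ring. Qed.
Lemma innpZl (a : R) x y : innp (a *: x) y = a * innp x y.
Proof. rewrite !innpE !mxE; ring. Qed.
Lemma innpZr (a : R) x y : innp x (a *: y) = a * innp x y.
Proof. rewrite !innpE !mxE; ring. Qed.
Lemma innpNl x y : innp (- x) y = - innp x y.
Proof. rewrite !innpE !mxE; ring. Qed.
Lemma innpNr x y : innp x (- y) = - innp x y.
Proof. rewrite !innpE !mxE; ring. Qed.
Lemma innp0l x : innp 0 x = 0.
Proof. rewrite !innpE !mxE; ring. Qed.
Lemma innp0r x : innp x 0 = 0.
Proof. rewrite !innpE !mxE; ring. Qed.

Lemma innp_mx x y : innp x y = (x^T *m y) 0 0.
Proof. by rewrite mxE; apply: eq_bigr => a _; rewrite mxE. Qed.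

Lemma innp_mull (M : 'M[R]_7) x y : innp (M *m x) y = innp x (M^T *m y).
Proof. by rewrite !innp_mx trmx_mul mulmxA. Qed.

Lemma innp_self_eq0 x : innp x x = 0 -> x = 0.
Proof.
move=> H; apply/matrixP => a b; rewrite ord1 mxE.
have /psumr_eq0P H2 : \sum_(c < 7) x c 0 * x c 0 = 0 by [].
have H3 : forall c : 'I_7, true -> 0 <= x c 0 * x c 0.
  by move=> c _; rewrite -expr2; exact: sqr_ge0.
by move: (H2 H3 a isT) => /eqP; rewrite mulf_eq0 orbb => /eqP.
Qed.

Lemma mxP_act (A B : 'M[R]_7) : (forall x, A *m x = B *m x) -> A = B.
Proof.
move=> H; apply/matrixP => a b.
have := H (delta_mx b 0); rewrite -!colE => /matrixP /(_ a 0).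
by rewrite !mxE.
Qed.

Lemma outer_act u w x : (u *m w^T) *m x = innp w x *: u.
Proof.
rewrite -mulmxA; have -> : w^T *m x = (innp w x)%:M.
  by apply/matrixP => a b; rewrite !ord1 innp_mx !mxE eqxx mulr1n.
by rewrite mul_mx_scalar.
Qed.

Lemma outer_tr u w : \tr (u *m w^T) = innp w u.
Proof.
rewrite /mxtrace /innp; apply: eq_bigr => a _.
by rewrite mxE big_ord1 mxE mulrC.
Qed.

Lemma outer_trmx u w : (u *m w^T)^T = w *m u^T.
Proof. by rewrite trmx_mul trmxK. Qed.

End Lin.

Section Frame.
Variable R : realFieldType.
Variables i j l : 'cV[R]_7.
Hypothesis hi : innp i i = 1.
Hypothesis hj : innp j j = 1.
Hypothesis hij : innp i j = 0.
Hypothesis hl : innp l l = 1.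
Hypothesis hli : innp l i = 0.
Hypothesis hlj : innp l j = 0.
Hypothesis hlk : innp l (cross i j) = 0.

Local Notation k := (cross i j).

Lemma t_ii : cross i i = 0. Proof. exact: crossxx. Qed.
Lemma t_jj : cross j j = 0. Proof. exact: crossxx. Qed.
Lemma t_kk : cross k k = 0. Proof. exact: crossxx. Qed.
Lemma t_ji : cross j i = - k. Proof. by rewrite crossC. Qed.
Lemma t_ik : cross i k = - j. Proof. by rewrite crossxxy hij hi scale0r scale1r sub0r. Qed.
Lemma t_ki : cross k i = j. Proof. by rewrite crossC t_ik opprK. Qed.
Lemma t_jk : cross j k = i.
Proof. by rewrite -[k]opprK -t_ji crossNr crossxxy innpC hij hj scale0r scale1r sub0r opprK. Qed.
Lemma t_kj : cross k j = - i. Proof. by rewrite crossC t_jk. Qed.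

Lemma g_kk : innp k k = 1.
Proof. by rewrite gramP hi hj hij mulr0 mulr1 subr0. Qed.
Lemma g_ki : innp k i = 0.
Proof. by rewrite innp_cyc innp_cyc crossxx innp0l. Qed.
Lemma g_kj : innp k j = 0.
Proof. by rewrite innp_cyc t_jj innp0l. Qed.

Lemma mixed a b : innp a l = 0 -> innp b l = 0 ->
  cross a (cross b l) = - cross (cross a b) l - innp a b *: l.
Proof.
move=> ha hb; rewrite cross3 (innpC a l) (innpC b l) in ha hb *.
by rewrite ha hb mulr0 !scale0r subr0 addr0.
Qed.

Lemma perp_cross a u : innp (cross a l) u = innp (cross u a) l.
Proof. by rewrite innp_cyc innp_cyc. Qed.
Lemma g_lv a : innp l (cross a l) = 0.
Proof. by rewrite innpC innp_cyc crossxx innp0l. Qed.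
Lemma g_vv a b : innp a l = 0 -> innp b l = 0 ->
  innp (cross a l) (cross b l) = innp a b.
Proof.
move=> ha hb; rewrite (innpC (cross a l)) gramP (innpC b a) hl.
by rewrite ha hb mulr0 subr0 mulr1.
Qed.

Lemma il : innp i l = 0. Proof. by rewrite innpC. Qed.
Lemma jl : innp j l = 0. Proof. by rewrite innpC. Qed.
Lemma kl : innp k l = 0. Proof. by rewrite innpC. Qed.


Lemma w_i1 : cross i (cross i l) = - l.
Proof. by rewrite crossxxy il hi scale0r scale1r sub0r. Qed.
Lemma w_i2 : cross i (cross j l) = - cross k l.
Proof. by rewrite mixed ?il ?jl // hij scale0r subr0. Qed.
Lemma w_i3 : cross i (cross k l) = cross j l.
Proof. by rewrite mixed ?il ?kl // t_ik crossNl opprK innpC g_ki scale0r subr0. Qed.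
Lemma w_j1 : cross j (cross i l) = cross k l.
Proof. by rewrite mixed ?il ?jl // t_ji crossNl opprK innpC hij scale0r subr0. Qed.
Lemma w_j2 : cross j (cross j l) = - l.
Proof. by rewrite crossxxy jl hj scale0r scale1r sub0r. Qed.
Lemma w_j3 : cross j (cross k l) = - cross i l.
Proof. by rewrite mixed ?jl ?kl // t_jk innpC g_kj scale0r subr0. Qed.
Lemma w_k1 : cross k (cross i l) = - cross j l.
Proof. by rewrite mixed ?kl ?il // t_ki g_ki scale0r subr0. Qed.
Lemma w_k2 : cross k (cross j l) = cross i l.
Proof. by rewrite mixed ?kl ?jl // t_kj crossNl opprK g_kj scale0r subr0. Qed.
Lemma w_k3 : cross k (cross k l) = - l.
Proof. by rewrite crossxxy kl g_kk scale0r scale1r sub0r. Qed.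

Lemma g_i_i : innp i i = 1.
Proof. exact: hi. Qed.
Lemma g_i_j : innp i j = 0.
Proof. exact: hij. Qed.
Lemma g_i_k : innp i k = 0.
Proof. by rewrite innpC g_ki. Qed.
Lemma g_i_l : innp i l = 0.
Proof. exact: il. Qed.
Lemma g_i_v1 : innp i (cross i l) = 0.
Proof. by rewrite innpC perp_cross ?t_ii ?t_jj ?t_kk ?t_ji ?t_ik ?t_ki ?t_jk ?t_kj ?innpNl ?innp0l ?il ?jl ?kl ?oppr0. Qed.
Lemma g_i_v2 : innp i (cross j l) = 0.
Proof. by rewrite innpC perp_cross ?t_ii ?t_jj ?t_kk ?t_ji ?t_ik ?t_ki ?t_jk ?t_kj ?innpNl ?innp0l ?il ?jl ?kl ?oppr0. Qed.
Lemma g_i_v3 : innp i (cross k l) = 0.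
Proof. by rewrite innpC perp_cross ?t_ii ?t_jj ?t_kk ?t_ji ?t_ik ?t_ki ?t_jk ?t_kj ?innpNl ?innp0l ?il ?jl ?kl ?oppr0. Qed.
Lemma g_j_i : innp j i = 0.
Proof. by rewrite innpC hij. Qed.
Lemma g_j_j : innp j j = 1.
Proof. exact: hj. Qed.
Lemma g_j_k : innp j k = 0.
Proof. by rewrite innpC g_kj. Qed.
Lemma g_j_l : innp j l = 0.
Proof. exact: jl. Qed.
Lemma g_j_v1 : innp j (cross i l) = 0.
Proof. by rewrite innpC perp_cross ?t_ii ?t_jj ?t_kk ?t_ji ?t_ik ?t_ki ?t_jk ?t_kj ?innpNl ?innp0l ?il ?jl ?kl ?oppr0. Qed.
Lemma g_j_v2 : innp j (cross j l) = 0.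
Proof. by rewrite innpC perp_cross ?t_ii ?t_jj ?t_kk ?t_ji ?t_ik ?t_ki ?t_jk ?t_kj ?innpNl ?innp0l ?il ?jl ?kl ?oppr0. Qed.
Lemma g_j_v3 : innp j (cross k l) = 0.
Proof. by rewrite innpC perp_cross ?t_ii ?t_jj ?t_kk ?t_ji ?t_ik ?t_ki ?t_jk ?t_kj ?innpNl ?innp0l ?il ?jl ?kl ?oppr0. Qed.
Lemma g_k_i : innp k i = 0.
Proof. exact: g_ki. Qed.
Lemma g_k_j : innp k j = 0.
Proof. exact: g_kj. Qed.
Lemma g_k_k : innp k k = 1.
Proof. exact: g_kk. Qed.
Lemma g_k_l : innp k l = 0.
Proof. exact: kl. Qed.
Lemma g_k_v1 : innp k (cross i l) = 0.
Proof. by rewrite innpC perp_cross ?t_ii ?t_jj ?t_kk ?t_ji ?t_ik ?t_ki ?t_jk ?t_kj ?innpNl ?innp0l ?il ?jl ?kl ?oppr0. Qed.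
Lemma g_k_v2 : innp k (cross j l) = 0.
Proof. by rewrite innpC perp_cross ?t_ii ?t_jj ?t_kk ?t_ji ?t_ik ?t_ki ?t_jk ?t_kj ?innpNl ?innp0l ?il ?jl ?kl ?oppr0. Qed.
Lemma g_k_v3 : innp k (cross k l) = 0.
Proof. by rewrite innpC perp_cross ?t_ii ?t_jj ?t_kk ?t_ji ?t_ik ?t_ki ?t_jk ?t_kj ?innpNl ?innp0l ?il ?jl ?kl ?oppr0. Qed.
Lemma g_l_i : innp l i = 0.
Proof. exact: hli. Qed.
Lemma g_l_j : innp l j = 0.
Proof. exact: hlj. Qed.
Lemma g_l_k : innp l k = 0.
Proof. exact: hlk. Qed.
Lemma g_l_l : innp l l = 1.
Proof. exact: hl. Qed.
Lemma g_l_v1 : innp l (cross i l) = 0.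
Proof. exact: g_lv. Qed.
Lemma g_l_v2 : innp l (cross j l) = 0.
Proof. exact: g_lv. Qed.
Lemma g_l_v3 : innp l (cross k l) = 0.
Proof. exact: g_lv. Qed.
Lemma g_v1_i : innp (cross i l) i = 0.
Proof. by rewrite perp_cross ?t_ii ?t_jj ?t_kk ?t_ji ?t_ik ?t_ki ?t_jk ?t_kj ?innpNl ?innp0l ?il ?jl ?kl ?oppr0. Qed.
Lemma g_v1_j : innp (cross i l) j = 0.
Proof. by rewrite perp_cross ?t_ii ?t_jj ?t_kk ?t_ji ?t_ik ?t_ki ?t_jk ?t_kj ?innpNl ?innp0l ?il ?jl ?kl ?oppr0. Qed.
Lemma g_v1_k : innp (cross i l) k = 0.
Proof. by rewrite perp_cross ?t_ii ?t_jj ?t_kk ?t_ji ?t_ik ?t_ki ?t_jk ?t_kj ?innpNl ?innp0l ?il ?jl ?kl ?oppr0. Qed.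
Lemma g_v1_l : innp (cross i l) l = 0.
Proof. by rewrite innpC g_lv. Qed.
Lemma g_v1_v1 : innp (cross i l) (cross i l) = 1.
Proof. rewrite g_vv ?il ?jl ?kl //; exact: hi. Qed.
Lemma g_v1_v2 : innp (cross i l) (cross j l) = 0.
Proof. rewrite g_vv ?il ?jl ?kl //; exact: hij. Qed.
Lemma g_v1_v3 : innp (cross i l) (cross k l) = 0.
Proof. rewrite g_vv ?il ?jl ?kl //; by rewrite innpC g_ki. Qed.
Lemma g_v2_i : innp (cross j l) i = 0.
Proof. by rewrite perp_cross ?t_ii ?t_jj ?t_kk ?t_ji ?t_ik ?t_ki ?t_jk ?t_kj ?innpNl ?innp0l ?il ?jl ?kl ?oppr0. Qed.
Lemma g_v2_j : innp (cross j l) j = 0.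
Proof. by rewrite perp_cross ?t_ii ?t_jj ?t_kk ?t_ji ?t_ik ?t_ki ?t_jk ?t_kj ?innpNl ?innp0l ?il ?jl ?kl ?oppr0. Qed.
Lemma g_v2_k : innp (cross j l) k = 0.
Proof. by rewrite perp_cross ?t_ii ?t_jj ?t_kk ?t_ji ?t_ik ?t_ki ?t_jk ?t_kj ?innpNl ?innp0l ?il ?jl ?kl ?oppr0. Qed.
Lemma g_v2_l : innp (cross j l) l = 0.
Proof. by rewrite innpC g_lv. Qed.
Lemma g_v2_v1 : innp (cross j l) (cross i l) = 0.
Proof. rewrite g_vv ?il ?jl ?kl //; by rewrite innpC hij. Qed.
Lemma g_v2_v2 : innp (cross j l) (cross j l) = 1.
Proof. rewrite g_vv ?il ?jl ?kl //; exact: hj. Qed.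
Lemma g_v2_v3 : innp (cross j l) (cross k l) = 0.
Proof. rewrite g_vv ?il ?jl ?kl //; by rewrite innpC g_kj. Qed.
Lemma g_v3_i : innp (cross k l) i = 0.
Proof. by rewrite perp_cross ?t_ii ?t_jj ?t_kk ?t_ji ?t_ik ?t_ki ?t_jk ?t_kj ?innpNl ?innp0l ?il ?jl ?kl ?oppr0. Qed.
Lemma g_v3_j : innp (cross k l) j = 0.
Proof. by rewrite perp_cross ?t_ii ?t_jj ?t_kk ?t_ji ?t_ik ?t_ki ?t_jk ?t_kj ?innpNl ?innp0l ?il ?jl ?kl ?oppr0. Qed.
Lemma g_v3_k : innp (cross k l) k = 0.
Proof. by rewrite perp_cross ?t_ii ?t_jj ?t_kk ?t_ji ?t_ik ?t_ki ?t_jk ?t_kj ?innpNl ?innp0l ?il ?jl ?kl ?oppr0. Qed.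
Lemma g_v3_l : innp (cross k l) l = 0.
Proof. by rewrite innpC g_lv. Qed.
Lemma g_v3_v1 : innp (cross k l) (cross i l) = 0.
Proof. rewrite g_vv ?il ?jl ?kl //; exact: g_ki. Qed.
Lemma g_v3_v2 : innp (cross k l) (cross j l) = 0.
Proof. rewrite g_vv ?il ?jl ?kl //; exact: g_kj. Qed.
Lemma g_v3_v3 : innp (cross k l) (cross k l) = 1.
Proof. rewrite g_vv ?il ?jl ?kl //; exact: g_kk. Qed.


Definition Fr7 (c0 c1 c2 c3 c4 c5 c6 : R) : 'cV[R]_7 :=
  c0 *: i + c1 *: j + c2 *: k + c3 *: l + c4 *: cross i l + c5 *: cross j l + c6 *: cross k l.

Lemma innpFr c0 c1 c2 c3 c4 c5 c6 e0 e1 e2 e3 e4 e5 e6 :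
  innp (Fr7 c0 c1 c2 c3 c4 c5 c6) (Fr7 e0 e1 e2 e3 e4 e5 e6) =
  c0 * e0 + c1 * e1 + c2 * e2 + c3 * e3 + c4 * e4 + c5 * e5 + c6 * e6.
Proof.
rewrite /Fr7 !innpDl !innpDr !innpZl !innpZr.
rewrite !g_i_i !g_i_j !g_i_k !g_i_l !g_i_v1 !g_i_v2 !g_i_v3 !g_j_i !g_j_j !g_j_k !g_j_l !g_j_v1 !g_j_v2 !g_j_v3 !g_k_i !g_k_j !g_k_k !g_k_l !g_k_v1 !g_k_v2 !g_k_v3 !g_l_i !g_l_j !g_l_k !g_l_l !g_l_v1 !g_l_v2 !g_l_v3 !g_v1_i !g_v1_j !g_v1_k !g_v1_l !g_v1_v1 !g_v1_v2 !g_v1_v3 !g_v2_i !g_v2_j !g_v2_k !g_v2_l !g_v2_v1 !g_v2_v2 !g_v2_v3 !g_v3_i !g_v3_j !g_v3_k !g_v3_l !g_v3_v1 !g_v3_v2 !g_v3_v3.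
ring.
Qed.

Ltac vring := let n := fresh "n" in apply: colP7 => n _; rewrite !mxE; ring.

Lemma FrD c0 c1 c2 c3 c4 c5 c6 e0 e1 e2 e3 e4 e5 e6 :
  Fr7 c0 c1 c2 c3 c4 c5 c6 + Fr7 e0 e1 e2 e3 e4 e5 e6 =
  Fr7 (c0 + e0) (c1 + e1) (c2 + e2) (c3 + e3) (c4 + e4) (c5 + e5) (c6 + e6).
Proof. rewrite /Fr7; vring. Qed.
Lemma FrZ a c0 c1 c2 c3 c4 c5 c6 :
  a *: Fr7 c0 c1 c2 c3 c4 c5 c6 =
  Fr7 (a * c0) (a * c1) (a * c2) (a * c3) (a * c4) (a * c5) (a * c6).
Proof. rewrite /Fr7; vring. Qed.
Lemma FrN c0 c1 c2 c3 c4 c5 c6 :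
  - Fr7 c0 c1 c2 c3 c4 c5 c6 = Fr7 (- c0) (- c1) (- c2) (- c3) (- c4) (- c5) (- c6).
Proof. rewrite /Fr7; vring. Qed.
Lemma FrB c0 c1 c2 c3 c4 c5 c6 e0 e1 e2 e3 e4 e5 e6 :
  Fr7 c0 c1 c2 c3 c4 c5 c6 - Fr7 e0 e1 e2 e3 e4 e5 e6 =
  Fr7 (c0 - e0) (c1 - e1) (c2 - e2) (c3 - e3) (c4 - e4) (c5 - e5) (c6 - e6).
Proof. rewrite /Fr7; vring. Qed.

Lemma crossFr x0 x1 x2 y0 y1 y2 y3 y4 y5 y6 :
  cross (Fr7 x0 x1 x2 0 0 0 0) (Fr7 y0 y1 y2 y3 y4 y5 y6) =
  Fr7 (x1 * y2 - x2 * y1) (x2 * y0 - x0 * y2) (x0 * y1 - x1 * y0)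
      (- x0 * y4 - x1 * y5 - x2 * y6) (x0 * y3 - x1 * y6 + x2 * y5)
      (x0 * y6 + x1 * y3 - x2 * y4) (- x0 * y5 + x1 * y4 + x2 * y3).
Proof.
rewrite /Fr7 !crossDl !crossDr !crossZl !crossZr.
rewrite ?t_ii ?t_jj ?t_kk ?t_ji ?t_ik ?t_ki ?t_jk ?t_kj.
rewrite ?w_i1 ?w_i2 ?w_i3 ?w_j1 ?w_j2 ?w_j3 ?w_k1 ?w_k2 ?w_k3.
vring.
Qed.

Lemma crossFrR x0 x1 x2 y0 y1 y2 y3 y4 y5 y6 :
  cross (Fr7 y0 y1 y2 y3 y4 y5 y6) (Fr7 x0 x1 x2 0 0 0 0) =
  Fr7 (- (x1 * y2 - x2 * y1)) (- (x2 * y0 - x0 * y2)) (- (x0 * y1 - x1 * y0))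
      (- (- x0 * y4 - x1 * y5 - x2 * y6)) (- (x0 * y3 - x1 * y6 + x2 * y5))
      (- (x0 * y6 + x1 * y3 - x2 * y4)) (- (- x0 * y5 + x1 * y4 + x2 * y3)).
Proof. by rewrite crossC crossFr FrN. Qed.

Definition fr (m : 'I_7) : 'cV[R]_7 :=
  nth 0 [:: i; j; k; l; cross i l; cross j l; cross k l] m.
Definition Fm : 'M[R]_7 := \matrix_(a, m) fr m a 0.

Lemma Fm_gram : Fm^T *m Fm = 1%:M.
Proof.
apply/matrixP => m n.
have -> : (Fm^T *m Fm) m n = innp (fr m) (fr n).
  by rewrite mxE /innp; apply: eq_bigr => a _; rewrite !mxE.
rewrite -(inord_val m) -(inord_val n) mxE inord_eq //.
case: m => [[|[|[|[|[|[|[|m]]]]]]] //= _];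
case: n => [[|[|[|[|[|[|[|n]]]]]]] //= _];
rewrite /fr ?inordK //= ?mulr1n ?mulr0n; rewrite ?g_i_i ?g_i_j ?g_i_k ?g_i_l ?g_i_v1 ?g_i_v2 ?g_i_v3 ?g_j_i ?g_j_j ?g_j_k ?g_j_l ?g_j_v1 ?g_j_v2 ?g_j_v3 ?g_k_i ?g_k_j ?g_k_k ?g_k_l ?g_k_v1 ?g_k_v2 ?g_k_v3 ?g_l_i ?g_l_j ?g_l_k ?g_l_l ?g_l_v1 ?g_l_v2 ?g_l_v3 ?g_v1_i ?g_v1_j ?g_v1_k ?g_v1_l ?g_v1_v1 ?g_v1_v2 ?g_v1_v3 ?g_v2_i ?g_v2_j ?g_v2_k ?g_v2_l ?g_v2_v1 ?g_v2_v2 ?g_v2_v3 ?g_v3_i ?g_v3_j ?g_v3_k ?g_v3_l ?g_v3_v1 ?g_v3_v2 ?g_v3_v3 //.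
Qed.

Lemma frame_exp x : x = Fr7 (innp i x) (innp j x) (innp k x) (innp l x)
  (innp (cross i l) x) (innp (cross j l) x) (innp (cross k l) x).
Proof.
have H := mulmx1C Fm_gram.
rewrite -{1}(mul1mx x) -H -mulmxA.
apply/matrixP => a b; rewrite ord1 mxE sum7 /Fr7 !mxE.
rewrite /fr !inordK //=.
have E : forall m : nat, (m < 7)%N ->
    \sum_(c < 7) Fm^T (inord m) c * x c 0 = innp (fr (inord m)) x.
  by move=> m hm; rewrite /innp; apply: eq_bigr => c _; rewrite !mxE.
rewrite !E // /fr !inordK //=.
ring.
Qed.
End Frame.

Section Main.
Variable R : realFieldType.
Variable pi : 'M[R]_7.
Variables i j l : 'cV[R]_7.
Hypothesis hi : innp i i = 1.
Hypothesis hj : innp j j = 1.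
Hypothesis hij : innp i j = 0.
Hypothesis hl : innp l l = 1.
Hypothesis hli : innp l i = 0.
Hypothesis hlj : innp l j = 0.
Hypothesis hlk : innp l (cross i j) = 0.
Hypothesis psym : pi^T = pi.
Hypothesis ppi : pi *m i = i.
Hypothesis ppj : pi *m j = j.
Hypothesis ppk : pi *m cross i j = cross i j.
Hypothesis ppl : pi *m l = 0.
Hypothesis pp1 : pi *m cross i l = 0.
Hypothesis pp2 : pi *m cross j l = 0.
Hypothesis pp3 : pi *m cross (cross i j) l = 0.

Local Notation k := (cross i j).
Implicit Types u v w : 'cV[R]_7.
Local Notation FR := (Fr7 i j l).

Ltac vring := let n := fresh "n" in apply: colP7 => n _; rewrite !mxE; ring.

Lemma Fr_congr c0 c1 c2 c3 c4 c5 c6 e0 e1 e2 e3 e4 e5 e6 :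
  c0 = e0 -> c1 = e1 -> c2 = e2 -> c3 = e3 -> c4 = e4 -> c5 = e5 -> c6 = e6 ->
  FR c0 c1 c2 c3 c4 c5 c6 = FR e0 e1 e2 e3 e4 e5 e6.
Proof. by move=> -> -> -> -> -> -> ->. Qed.

Lemma FRi : i = FR 1 0 0 0 0 0 0. Proof. rewrite /Fr7; vring. Qed.
Lemma FRj : j = FR 0 1 0 0 0 0 0. Proof. rewrite /Fr7; vring. Qed.
Lemma FRk : k = FR 0 0 1 0 0 0 0. Proof. rewrite /Fr7; vring. Qed.
Lemma FRl : l = FR 0 0 0 1 0 0 0. Proof. rewrite /Fr7; vring. Qed.
Lemma FR1 : cross i l = FR 0 0 0 0 1 0 0. Proof. rewrite /Fr7; vring. Qed.
Lemma FR2 : cross j l = FR 0 0 0 0 0 1 0. Proof. rewrite /Fr7; vring. Qed.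
Lemma FR3 : cross k l = FR 0 0 0 0 0 0 1. Proof. rewrite /Fr7; vring. Qed.

Lemma piFr c0 c1 c2 c3 c4 c5 c6 :
  pi *m FR c0 c1 c2 c3 c4 c5 c6 = FR c0 c1 c2 0 0 0 0.
Proof.
rewrite /Fr7 !mulmxDr -!scalemxAr ppi ppj ppk ppl pp1 pp2 pp3; vring.
Qed.

Lemma pi_exp (x : 'cV[R]_7) : pi *m x = FR (innp i x) (innp j x) (innp k x) 0 0 0 0.
Proof. by rewrite {1}(frame_exp hi hj hij hl hli hlj hlk x) piFr. Qed.

Lemma innp_pi (x y : 'cV[R]_7) : innp (pi *m x) y = innp x (pi *m y).
Proof. by rewrite innp_mull psym. Qed.

Lemma mxP_fr (A B : 'M[R]_7) :
  (forall c0 c1 c2 c3 c4 c5 c6, A *m FR c0 c1 c2 c3 c4 c5 c6 = B *m FR c0 c1 c2 c3 c4 c5 c6) ->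
  A = B.
Proof.
move=> H; apply: mxP_act => x.
by rewrite (frame_exp hi hj hij hl hli hlj hlk x) H.
Qed.

Lemma innpFR c0 c1 c2 c3 c4 c5 c6 e0 e1 e2 e3 e4 e5 e6 :
  innp (FR c0 c1 c2 c3 c4 c5 c6) (FR e0 e1 e2 e3 e4 e5 e6) =
  c0 * e0 + c1 * e1 + c2 * e2 + c3 * e3 + c4 * e4 + c5 * e5 + c6 * e6.
Proof. exact: innpFr. Qed.

Lemma crossFR x0 x1 x2 y0 y1 y2 y3 y4 y5 y6 :
  cross (FR x0 x1 x2 0 0 0 0) (FR y0 y1 y2 y3 y4 y5 y6) =
  FR (x1 * y2 - x2 * y1) (x2 * y0 - x0 * y2) (x0 * y1 - x1 * y0)
      (- x0 * y4 - x1 * y5 - x2 * y6) (x0 * y3 - x1 * y6 + x2 * y5)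
      (x0 * y6 + x1 * y3 - x2 * y4) (- x0 * y5 + x1 * y4 + x2 * y3).
Proof. exact: crossFr. Qed.

Lemma crossFRR x0 x1 x2 y0 y1 y2 y3 y4 y5 y6 :
  cross (FR y0 y1 y2 y3 y4 y5 y6) (FR x0 x1 x2 0 0 0 0) =
  FR (- (x1 * y2 - x2 * y1)) (- (x2 * y0 - x0 * y2)) (- (x0 * y1 - x1 * y0))
      (- (- x0 * y4 - x1 * y5 - x2 * y6)) (- (x0 * y3 - x1 * y6 + x2 * y5))
      (- (x0 * y6 + x1 * y3 - x2 * y4)) (- (- x0 * y5 + x1 * y4 + x2 * y3)).
Proof. exact: crossFrR. Qed.

Lemma mulFR (d : 'M[R]_7) c0 c1 c2 c3 c4 c5 c6 :
  d *m FR c0 c1 c2 c3 c4 c5 c6 = c0 *: (d *m i) + c1 *: (d *m j) + c2 *: (d *m k)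
    + c3 *: (d *m l) + c4 *: (d *m cross i l) + c5 *: (d *m cross j l) + c6 *: (d *m cross k l).
Proof. by rewrite /Fr7 !mulmxDr -!scalemxAr. Qed.

Definition Dact (a0 a1 a2 a3 b0 b1 b2 b3 g0 g1 g2 g3 c0 c1 c2 c3 c4 c5 c6 : R) :=
  FR (a0 * c3 + a1 * c4 + a2 * c5 + a3 * c6)
     (b0 * c3 + b1 * c4 + b2 * c5 + b3 * c6)
     (g0 * c3 + g1 * c4 + g2 * c5 + g3 * c6)
     (c0 * a0 + c1 * b0 + c2 * g0)
     (c0 * a1 + c1 * b1 + c2 * g1)
     (c0 * a2 + c1 * b2 + c2 * g2)
     (c0 * a3 + c1 * b3 + c2 * g3).

Lemma act_comb a0 a1 a2 a3 b0 b1 b2 b3 g0 g1 g2 g3 c0 c1 c2 c3 c4 c5 c6 :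
  c0 *: FR 0 0 0 a0 a1 a2 a3 + c1 *: FR 0 0 0 b0 b1 b2 b3 + c2 *: FR 0 0 0 g0 g1 g2 g3
  + c3 *: FR a0 b0 g0 0 0 0 0 + c4 *: FR a1 b1 g1 0 0 0 0 + c5 *: FR a2 b2 g2 0 0 0 0
  + c6 *: FR a3 b3 g3 0 0 0 0 = Dact a0 a1 a2 a3 b0 b1 b2 b3 g0 g1 g2 g3 c0 c1 c2 c3 c4 c5 c6.
Proof. rewrite /Dact /Fr7; vring. Qed.

Section TGr.
Variable d : 'M[R]_7.
Hypothesis hd : inTGr pi d.

Lemma TGr_act (x : 'cV[R]_7) : d *m (pi *m x) + pi *m (d *m x) = d *m x.
Proof. by case: hd => H _; rewrite !mulmxA -mulmxDl H. Qed.

Lemma TGr_sym (x y : 'cV[R]_7) : innp (d *m x) y = innp x (d *m y).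
Proof. by case: hd => _ [H _]; rewrite innp_mull H. Qed.

Lemma TGr_V0 u : pi *m u = u ->
  d *m u = FR 0 0 0 (innp l (d *m u)) (innp (cross i l) (d *m u))
                     (innp (cross j l) (d *m u)) (innp (cross k l) (d *m u)).
Proof.
move=> hu.
have H0 : pi *m (d *m u) = 0.
  by have := TGr_act u; rewrite hu => /eqP; rewrite -subr_eq0 addrAC subrr add0r => /eqP.
have Hz : forall w, pi *m w = w -> innp w (d *m u) = 0.
  by move=> w hw; rewrite -hw innp_pi H0 innp0r.
rewrite {1}(frame_exp hi hj hij hl hli hlj hlk (d *m u)).
by rewrite (Hz i ppi) (Hz j ppj) (Hz k ppk).
Qed.

Lemma TGr_W v : pi *m v = 0 ->
  d *m v = FR (innp v (d *m i)) (innp v (d *m j)) (innp v (d *m k)) 0 0 0 0.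
Proof.
move=> hv.
have H : d *m v = pi *m (d *m v).
  by have := TGr_act v; rewrite hv mulmx0 add0r.
by rewrite H pi_exp !(innpC v) !TGr_sym.
Qed.

Lemma dFr c0 c1 c2 c3 c4 c5 c6 :
  d *m FR c0 c1 c2 c3 c4 c5 c6 =
  Dact (innp l (d *m i)) (innp (cross i l) (d *m i)) (innp (cross j l) (d *m i)) (innp (cross k l) (d *m i))
       (innp l (d *m j)) (innp (cross i l) (d *m j)) (innp (cross j l) (d *m j)) (innp (cross k l) (d *m j))
       (innp l (d *m k)) (innp (cross i l) (d *m k)) (innp (cross j l) (d *m k)) (innp (cross k l) (d *m k))
       c0 c1 c2 c3 c4 c5 c6.
Proof.
rewrite mulFR {1}(TGr_V0 ppi) {1}(TGr_V0 ppj) {1}(TGr_V0 ppk) (TGr_W ppl) (TGr_W pp1) (TGr_W pp2) (TGr_W pp3).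
exact: act_comb.
Qed.

End TGr.

End Main.

Section Brk.
Variable R : realFieldType.
Variable P : 'M[R]_7.
Implicit Types A B C : 'M[R]_7.

Lemma trmxB7 A B : (A - B)^T = A^T - B^T.
Proof. by apply/matrixP => a b; rewrite !mxE. Qed.

Lemma anti_r A : A *m P + P *m A = A -> A *m P = A - P *m A.
Proof. by move=> h; rewrite -{2}h addrK. Qed.

Lemma comm2 A B : A *m P + P *m A = A -> B *m P + P *m B = B ->
  (A *m B) *m P = P *m (A *m B).
Proof.
move=> hA hB.
rewrite -mulmxA (anti_r hB) mulmxBr (mulmxA A P B) (anti_r hA) mulmxBl.
by rewrite opprB addrC subrK mulmxA.
Qed.

Lemma brk_TGr pi A B C : pi = P -> inTGr P A -> inTGr P B -> inTGr P C ->
  inTGr pi (brk (brk A B) C).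
Proof.
move=> -> [hA [sA tA]] [hB [sB tB]] [hC [sC tC]].
set T := brk A B.
have hT : T *m P = P *m T.
  by rewrite /T /brk mulmxBl mulmxBr (comm2 hA hB) (comm2 hB hA).
have eT : T^T = - T by rewrite /T /brk trmxB7 !trmx_mul sA sB opprB.
have trT : \tr T = \tr T by [].
clearbody T.
split; last split.
- rewrite /brk mulmxBl mulmxBr -!mulmxA (anti_r hC) hT mulmxBr !mulmxA hT (anti_r hC) mulmxBl.
  by apply/matrixP => a b; rewrite !mxE; ring.
- rewrite /brk trmxB7 !trmx_mul eT sC mulmxN mulNmx.
  by apply/matrixP => a b; rewrite !mxE; ring.
- by rewrite /brk linearB /= mxtrace_mulC subrr.
Qed.

End Brk.

Section Main2.
Variable R : realFieldType.
Variable pi : 'M[R]_7.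
Variables i j l : 'cV[R]_7.
Hypothesis hi : innp i i = 1.
Hypothesis hj : innp j j = 1.
Hypothesis hij : innp i j = 0.
Hypothesis hl : innp l l = 1.
Hypothesis hli : innp l i = 0.
Hypothesis hlj : innp l j = 0.
Hypothesis hlk : innp l (cross i j) = 0.
Hypothesis psym : pi^T = pi.
Hypothesis ppi : pi *m i = i.
Hypothesis ppj : pi *m j = j.
Hypothesis ppk : pi *m cross i j = cross i j.
Hypothesis ppl : pi *m l = 0.
Hypothesis pp1 : pi *m cross i l = 0.
Hypothesis pp2 : pi *m cross j l = 0.
Hypothesis pp3 : pi *m cross (cross i j) l = 0.

Local Notation k := (cross i j).
Local Notation FR := (Fr7 i j l).
Implicit Types u v w : 'cV[R]_7.


Let pi_exp' := pi_exp hi hj hij hl hli hlj hlk ppi ppj ppk ppl pp1 pp2 pp3.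
Let piFr' := piFr ppi ppj ppk ppl pp1 pp2 pp3.
Let mxP_fr' := mxP_fr hi hj hij hl hli hlj hlk.
Let dFr' := dFr hi hj hij hl hli hlj hlk psym ppi ppj ppk ppl pp1 pp2 pp3.
Let TGr_V0' := TGr_V0 hi hj hij hl hli hlj hlk psym ppi ppj ppk.
Let TGr_W' := TGr_W hi hj hij hl hli hlj hlk ppi ppj ppk ppl pp1 pp2 pp3.
Let crossFR' := crossFR hi hj hij hli hlj hlk.
Let crossFRR' := crossFRR hi hj hij hli hlj hlk.
Let innpFR' := innpFR hi hj hij hl hli hlj hlk.

Ltac vring := let n := fresh "n" in apply: colP7 => n _; rewrite !mxE; ring.

Definition sym u w : 'M[R]_7 := u *m w^T + w *m u^T.

Definition Dm (a0 a1 a2 a3 b0 b1 b2 b3 : R) : 'M[R]_7 :=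
  sym (FR 0 0 0 a0 a1 a2 a3) i + sym (FR 0 0 0 b0 b1 b2 b3) j
  + sym (FR 0 0 0 (a2 - b1) (a3 + b0) (- a0 + b3) (- a1 - b2)) k.

Lemma innp_iFR c0 c1 c2 c3 c4 c5 c6 : innp i (FR c0 c1 c2 c3 c4 c5 c6) = c0.
Proof. rewrite {1}(FRi i j l) innpFR'; ring. Qed.
Lemma innp_jFR c0 c1 c2 c3 c4 c5 c6 : innp j (FR c0 c1 c2 c3 c4 c5 c6) = c1.
Proof. rewrite {1}(FRj i j l) innpFR'; ring. Qed.
Lemma innp_kFR c0 c1 c2 c3 c4 c5 c6 : innp k (FR c0 c1 c2 c3 c4 c5 c6) = c2.
Proof. rewrite {1}(FRk i j l) innpFR'; ring. Qed.
Lemma innp_lFR c0 c1 c2 c3 c4 c5 c6 : innp l (FR c0 c1 c2 c3 c4 c5 c6) = c3.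
Proof. rewrite {1}(FRl i j l) innpFR'; ring. Qed.
Lemma innp_1FR c0 c1 c2 c3 c4 c5 c6 : innp (cross i l) (FR c0 c1 c2 c3 c4 c5 c6) = c4.
Proof. rewrite {1}(FR1 i j l) innpFR'; ring. Qed.
Lemma innp_2FR c0 c1 c2 c3 c4 c5 c6 : innp (cross j l) (FR c0 c1 c2 c3 c4 c5 c6) = c5.
Proof. rewrite {1}(FR2 i j l) innpFR'; ring. Qed.
Lemma innp_3FR c0 c1 c2 c3 c4 c5 c6 : innp (cross k l) (FR c0 c1 c2 c3 c4 c5 c6) = c6.
Proof. rewrite {1}(FR3 i j l) innpFR'; ring. Qed.

Lemma Dm_act a0 a1 a2 a3 b0 b1 b2 b3 c0 c1 c2 c3 c4 c5 c6 :
  Dm a0 a1 a2 a3 b0 b1 b2 b3 *m FR c0 c1 c2 c3 c4 c5 c6 =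
  Dact i j l a0 a1 a2 a3 b0 b1 b2 b3 (a2 - b1) (a3 + b0) (- a0 + b3) (- a1 - b2)
    c0 c1 c2 c3 c4 c5 c6.
Proof.
rewrite /Dm /sym !mulmxDl !outer_act innp_iFR innp_jFR innp_kFR.
rewrite !innpFR'.
rewrite /Dact /Fr7; vring.
Qed.



Lemma innp_FRi c0 c1 c2 c3 c4 c5 c6 : innp (FR c0 c1 c2 c3 c4 c5 c6) i = c0.
Proof. by rewrite innpC innp_iFR. Qed.
Lemma innp_FRj c0 c1 c2 c3 c4 c5 c6 : innp (FR c0 c1 c2 c3 c4 c5 c6) j = c1.
Proof. by rewrite innpC innp_jFR. Qed.
Lemma innp_FRk c0 c1 c2 c3 c4 c5 c6 : innp (FR c0 c1 c2 c3 c4 c5 c6) k = c2.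
Proof. by rewrite innpC innp_kFR. Qed.

Lemma Dm_actV a0 a1 a2 a3 b0 b1 b2 b3 x0 x1 x2 :
  Dm a0 a1 a2 a3 b0 b1 b2 b3 *m FR x0 x1 x2 0 0 0 0 =
  FR 0 0 0 (x0 * a0 + x1 * b0 + x2 * (a2 - b1)) (x0 * a1 + x1 * b1 + x2 * (a3 + b0))
     (x0 * a2 + x1 * b2 + x2 * (- a0 + b3)) (x0 * a3 + x1 * b3 + x2 * (- a1 - b2)).
Proof. rewrite Dm_act /Dact; apply: Fr_congr; ring. Qed.

Lemma crossVV x0 x1 x2 y0 y1 y2 :
  cross (FR x0 x1 x2 0 0 0 0) (FR y0 y1 y2 0 0 0 0) =
  FR (x1 * y2 - x2 * y1) (x2 * y0 - x0 * y2) (x0 * y1 - x1 * y0) 0 0 0 0.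
Proof. rewrite crossFR'; apply: Fr_congr; ring. Qed.

Lemma trmxD7 (A B : 'M[R]_7) : (A + B)^T = A^T + B^T.
Proof. by apply/matrixP => a b; rewrite !mxE. Qed.

Lemma symT u w : (sym u w)^T = sym u w.
Proof. by rewrite /sym raddfD /= !outer_trmx addrC. Qed.

Lemma Dm_sym a0 a1 a2 a3 b0 b1 b2 b3 :
  (Dm a0 a1 a2 a3 b0 b1 b2 b3)^T = Dm a0 a1 a2 a3 b0 b1 b2 b3.
Proof. rewrite /Dm /sym !trmxD7 !outer_trmx; congr (_ + _ + _); exact: addrC. Qed.

Lemma Dm_tr a0 a1 a2 a3 b0 b1 b2 b3 : \tr (Dm a0 a1 a2 a3 b0 b1 b2 b3) = 0.
Proof.
rewrite /Dm /sym !mxtraceD !outer_tr innp_iFR innp_jFR innp_kFR innp_FRi innp_FRj innp_FRk.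
by rewrite !addr0.
Qed.

Lemma Dm_TGr a0 a1 a2 a3 b0 b1 b2 b3 : inTGr pi (Dm a0 a1 a2 a3 b0 b1 b2 b3).
Proof.
split; last by split; [exact: Dm_sym | exact: Dm_tr].
apply: mxP_fr' => c0 c1 c2 c3 c4 c5 c6.
rewrite mulmxDl -!mulmxA piFr' !Dm_act /Dact.
rewrite piFr' FrD; apply: Fr_congr; ring.
Qed.

Lemma Dm_derivFR a0 a1 a2 a3 b0 b1 b2 b3 x0 x1 x2 y0 y1 y2 :
  let D := Dm a0 a1 a2 a3 b0 b1 b2 b3 in
  D *m cross (FR x0 x1 x2 0 0 0 0) (FR y0 y1 y2 0 0 0 0) =
  cross (D *m FR x0 x1 x2 0 0 0 0) (FR y0 y1 y2 0 0 0 0)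
  + cross (FR x0 x1 x2 0 0 0 0) (D *m FR y0 y1 y2 0 0 0 0).
Proof.
rewrite /= crossVV !Dm_actV crossFRR' crossFR'.
rewrite FrD; apply: Fr_congr; ring.
Qed.

Lemma Dm_TMS a0 a1 a2 a3 b0 b1 b2 b3 : inTMS' pi (Dm a0 a1 a2 a3 b0 b1 b2 b3).
Proof.
split; first exact: Dm_TGr.
move=> x y [x' ->] [y' ->].
rewrite !pi_exp'.
exact: Dm_derivFR.
Qed.

Lemma cf_calc a0 a1 a2 a3 b0 b1 b2 b3 :
  cross (FR 0 0 0 a0 a1 a2 a3) j + cross i (FR 0 0 0 b0 b1 b2 b3) =
  FR 0 0 0 (a2 - b1) (a3 + b0) (- a0 + b3) (- a1 - b2).
Proof.
rewrite (crossC _ j) /Fr7 !crossDr !crossZr.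
rewrite ?t_ii ?t_jj ?t_kk ?(t_ji i j) ?(t_ik hi hij) ?(t_ki hi hij) ?(t_jk hj hij) ?(t_kj hj hij).
rewrite ?(w_i1 hi hli) ?(w_i2 hij hli hlj) ?(w_i3 hi hij hli hlk) ?(w_j1 hij hli hlj).
rewrite ?(w_j2 hj hlj) ?(w_j3 hj hij hlj hlk) ?(w_k1 hi hij hli hlk) ?(w_k2 hj hij hlj hlk).
rewrite ?(w_k3 hi hj hij hlk).
vring.
Qed.

Lemma TGr_dk d : inTGr pi d -> d *m k = cross (d *m i) j + cross i (d *m j) ->
  d *m k = FR 0 0 0
    (innp (cross j l) (d *m i) - innp (cross i l) (d *m j))
    (innp (cross k l) (d *m i) + innp l (d *m j))
    (- innp l (d *m i) + innp (cross k l) (d *m j))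
    (- innp (cross i l) (d *m i) - innp (cross j l) (d *m j)).
Proof.
move=> hd ->.
by rewrite {1}(TGr_V0' hd ppi) {1}(TGr_V0' hd ppj) cf_calc.
Qed.

Lemma TGr_Dm d : inTGr pi d -> d *m k = cross (d *m i) j + cross i (d *m j) ->
  d = Dm (innp l (d *m i)) (innp (cross i l) (d *m i)) (innp (cross j l) (d *m i))
         (innp (cross k l) (d *m i))
         (innp l (d *m j)) (innp (cross i l) (d *m j)) (innp (cross j l) (d *m j))
         (innp (cross k l) (d *m j)).
Proof.
move=> hd hk; apply: mxP_fr' => c0 c1 c2 c3 c4 c5 c6.
rewrite (dFr' hd) Dm_act (TGr_dk hd hk) innp_lFR innp_1FR innp_2FR innp_3FR.
by [].
Qed.

Lemma inIm_i : inIm pi i. Proof. by exists i; rewrite ppi. Qed.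
Lemma inIm_j : inIm pi j. Proof. by exists j; rewrite ppj. Qed.

Lemma TMS_Dm d : inTMS' pi d ->
  d = Dm (innp l (d *m i)) (innp (cross i l) (d *m i)) (innp (cross j l) (d *m i))
         (innp (cross k l) (d *m i))
         (innp l (d *m j)) (innp (cross i l) (d *m j)) (innp (cross j l) (d *m j))
         (innp (cross k l) (d *m j)).
Proof. by move=> [hd hder]; apply: TGr_Dm => //; apply: hder; [exact: inIm_i | exact: inIm_j]. Qed.

Lemma Dm_i a0 a1 a2 a3 b0 b1 b2 b3 :
  Dm a0 a1 a2 a3 b0 b1 b2 b3 *m i = FR 0 0 0 a0 a1 a2 a3.
Proof.
have -> : Dm a0 a1 a2 a3 b0 b1 b2 b3 *m i = Dm a0 a1 a2 a3 b0 b1 b2 b3 *m FR 1 0 0 0 0 0 0.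
  by rewrite -(FRi i j l).
rewrite Dm_actV; apply: Fr_congr; ring.
Qed.

Lemma Dm_j a0 a1 a2 a3 b0 b1 b2 b3 :
  Dm a0 a1 a2 a3 b0 b1 b2 b3 *m j = FR 0 0 0 b0 b1 b2 b3.
Proof.
have -> : Dm a0 a1 a2 a3 b0 b1 b2 b3 *m j = Dm a0 a1 a2 a3 b0 b1 b2 b3 *m FR 0 1 0 0 0 0 0.
  by rewrite -(FRj i j l).
rewrite Dm_actV; apply: Fr_congr; ring.
Qed.

Lemma part1 a0 a1 a2 a3 b0 b1 b2 b3 :
  exists d : 'M[R]_7,
    [/\ inTMS' pi d, d *m i = FR 0 0 0 a0 a1 a2 a3, d *m j = FR 0 0 0 b0 b1 b2 b3 &
        forall d' : 'M[R]_7, inTMS' pi d' ->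
          d' *m i = FR 0 0 0 a0 a1 a2 a3 -> d' *m j = FR 0 0 0 b0 b1 b2 b3 -> d' = d].
Proof.
exists (Dm a0 a1 a2 a3 b0 b1 b2 b3); split.
- exact: Dm_TMS.
- exact: Dm_i.
- exact: Dm_j.
move=> d' hd' h1 h2; rewrite (TMS_Dm hd') h1 h2.
by rewrite !innp_lFR !innp_1FR !innp_2FR !innp_3FR.
Qed.

Lemma crossFRj y0 y1 y2 y3 y4 y5 y6 :
  cross (FR y0 y1 y2 y3 y4 y5 y6) j = FR (- y2) 0 y0 y5 y6 (- y3) (- y4).
Proof. rewrite {2}(FRj i j l) crossFRR'; apply: Fr_congr; ring. Qed.

Lemma crossiFR y0 y1 y2 y3 y4 y5 y6 :
  cross i (FR y0 y1 y2 y3 y4 y5 y6) = FR 0 (- y2) y1 (- y4) y3 y6 (- y5).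
Proof. rewrite {1}(FRi i j l) crossFR'; apply: Fr_congr; ring. Qed.

Lemma FR4 a0 a1 a2 a3 a4 a5 a6 b0 b1 b2 b3 b4 b5 b6 c0 c1 c2 c3 c4 c5 c6 e0 e1 e2 e3 e4 e5 e6 :
  FR a0 a1 a2 a3 a4 a5 a6 - FR b0 b1 b2 b3 b4 b5 b6
  - (FR c0 c1 c2 c3 c4 c5 c6 - FR e0 e1 e2 e3 e4 e5 e6) =
  FR (a0 - b0 - (c0 - e0)) (a1 - b1 - (c1 - e1)) (a2 - b2 - (c2 - e2)) (a3 - b3 - (c3 - e3))
     (a4 - b4 - (c4 - e4)) (a5 - b5 - (c5 - e5)) (a6 - b6 - (c6 - e6)).
Proof. rewrite /Fr7; vring. Qed.

Lemma brk_act (A B C : 'M[R]_7) (x : 'cV[R]_7) :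
  brk (brk A B) C *m x = A *m (B *m (C *m x)) - B *m (A *m (C *m x))
    - (C *m (A *m (B *m x)) - C *m (B *m (A *m x))).
Proof. by rewrite /brk; do 4 rewrite ?mulmxBl ?mulmxBr -?mulmxA. Qed.

Lemma Lie_Dm p0 p1 p2 p3 p4 p5 p6 p7 q0 q1 q2 q3 q4 q5 q6 q7 r0 r1 r2 r3 r4 r5 r6 r7 :
  let E := brk (brk (Dm p0 p1 p2 p3 p4 p5 p6 p7) (Dm q0 q1 q2 q3 q4 q5 q6 q7))
               (Dm r0 r1 r2 r3 r4 r5 r6 r7) in
  E *m k = cross (E *m i) j + cross i (E *m j).
Proof.
move=> E.
have -> : E *m k = E *m FR 0 0 1 0 0 0 0 by rewrite -(FRk i j l).
have -> : E *m i = E *m FR 1 0 0 0 0 0 0 by rewrite -(FRi i j l).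
have -> : E *m j = E *m FR 0 1 0 0 0 0 0 by rewrite -(FRj i j l).
rewrite /E !brk_act.
rewrite !Dm_act /Dact ?Dm_act /Dact ?Dm_act /Dact ?Dm_act /Dact.
rewrite !FR4 crossFRj crossiFR FrD.
apply: Fr_congr; ring.
Qed.

Lemma Dm_lin8 k0 k1 k2 k3 k4 k5 k6 k7 :
  k0 *: Dm 1 0 0 0 0 0 0 0 + k1 *: Dm 0 1 0 0 0 0 0 0 + k2 *: Dm 0 0 1 0 0 0 0 0
  + k3 *: Dm 0 0 0 1 0 0 0 0 + k4 *: Dm 0 0 0 0 1 0 0 0 + k5 *: Dm 0 0 0 0 0 1 0 0
  + k6 *: Dm 0 0 0 0 0 0 1 0 + k7 *: Dm 0 0 0 0 0 0 0 1 = Dm k0 k1 k2 k3 k4 k5 k6 k7.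
Proof.
apply: mxP_fr' => c0 c1 c2 c3 c4 c5 c6.
do 7 rewrite mulmxDl; rewrite -!scalemxAl !Dm_act /Dact /Fr7; vring.
Qed.

Definition Xt : 8.-tuple 'M[R]_7 :=
  [tuple Dm 1 0 0 0 0 0 0 0; Dm 0 1 0 0 0 0 0 0; Dm 0 0 1 0 0 0 0 0; Dm 0 0 0 1 0 0 0 0;
         Dm 0 0 0 0 1 0 0 0; Dm 0 0 0 0 0 1 0 0; Dm 0 0 0 0 0 0 1 0; Dm 0 0 0 0 0 0 0 1].

Lemma sum8 (V : zmodType) (F : 'I_8 -> V) :
  \sum_(m < 8) F m = F (inord 0) + F (inord 1) + F (inord 2) + F (inord 3)
    + F (inord 4) + F (inord 5) + F (inord 6) + F (inord 7).
Proof.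
rewrite !big_ord_recl big_ord0 addr0 !addrA.
by repeat congr (_ + _); congr F; apply: val_inj; rewrite /= inordK.
Qed.

Lemma sumX (kk : 'I_8 -> R) :
  \sum_(m < 8) kk m *: Xt`_m = Dm (kk (inord 0)) (kk (inord 1)) (kk (inord 2)) (kk (inord 3))
    (kk (inord 4)) (kk (inord 5)) (kk (inord 6)) (kk (inord 7)).
Proof. by rewrite sum8 !inordK //= Dm_lin8. Qed.

Lemma Xt_free : free Xt.
Proof.
apply/freeP => kk; rewrite sumX => H.
have Hi := congr1 (fun M => innp l (M *m i)) H.
have H1 := congr1 (fun M => innp (cross i l) (M *m i)) H.
have H2 := congr1 (fun M => innp (cross j l) (M *m i)) H.
have H3 := congr1 (fun M => innp (cross k l) (M *m i)) H.
have Hj := congr1 (fun M => innp l (M *m j)) H.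
have H5 := congr1 (fun M => innp (cross i l) (M *m j)) H.
have H6 := congr1 (fun M => innp (cross j l) (M *m j)) H.
have H7 := congr1 (fun M => innp (cross k l) (M *m j)) H.
move: Hi H1 H2 H3 Hj H5 H6 H7 => /=.
rewrite Dm_i Dm_j !mul0mx !innp0r innp_lFR innp_1FR innp_2FR innp_3FR.
rewrite innp_lFR innp_1FR innp_2FR innp_3FR.
move=> e0 e1 e2 e3 e4 e5 e6 e7 m.
rewrite -(inord_val m); case: m => m hm /=.
by case: m hm => [|[|[|[|[|[|[|[|m]]]]]]]] //= _.
Qed.

Lemma dimXt : \dim <<Xt>>%VS = 8%N.
Proof. by move: Xt_free; rewrite /free size_tuple => /eqP. Qed.

Lemma memXt d : d \in <<Xt>>%VS <-> inTMS' pi d.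
Proof.
split.
  by move/coord_span => ->; rewrite sumX; exact: Dm_TMS.
move=> hd.
pose kk : 'I_8 -> R := fun m => nth 0 [:: innp l (d *m i); innp (cross i l) (d *m i);
  innp (cross j l) (d *m i); innp (cross k l) (d *m i); innp l (d *m j);
  innp (cross i l) (d *m j); innp (cross j l) (d *m j); innp (cross k l) (d *m j)] m.
have -> : d = \sum_(m < 8) kk m *: Xt`_m.
  by rewrite sumX /kk !inordK //=; exact: TMS_Dm.
apply: memv_suml => m _; apply: memvZ; rewrite -tnth_nth; apply: memv_span; exact: mem_tnth.
Qed.

Lemma sum4 (V : zmodType) (F : 'I_4 -> V) :
  \sum_(m < 4) F m = F (inord 0) + F (inord 1) + F (inord 2) + F (inord 3).
Proof.
rewrite !big_ord_recl big_ord0 addr0 !addrA.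
by repeat congr (_ + _); congr F; apply: val_inj; rewrite /= inordK.
Qed.

Lemma main_packaged :
  let kk := cross i j in
  let v := fun r : 'I_4 => [:: l; cross i l; cross j l; cross kk l]`_r in
  [/\ (forall a b : 'I_4 -> R,
         exists d : 'M[R]_7,
           [/\ inTMS' pi d,
               d *m i = \sum_(r < 4) a r *: v r,
               d *m j = \sum_(r < 4) b r *: v r &
               forall d' : 'M[R]_7,
                 inTMS' pi d' ->
                 d' *m i = \sum_(r < 4) a r *: v r ->
                 d' *m j = \sum_(r < 4) b r *: v r -> d' = d]),
      (exists U : {vspace 'M[R]_7},
         (forall d, d \in U <-> inTMS' pi d) /\ \dim U = 8%N) &
      ((forall d, inTMS' pi d -> inTGr pi d) /\
       forall d1 d2 d3, inTMS' pi d1 -> inTMS' pi d2 -> inTMS' pi d3 ->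
         inTMS' pi (brk (brk d1 d2) d3))].
Proof.
move=> kk v; subst kk v.
have sv : forall a : 'I_4 -> R,
    \sum_(r < 4) a r *: [:: l; cross i l; cross j l; cross k l]`_r =
    FR 0 0 0 (a (inord 0)) (a (inord 1)) (a (inord 2)) (a (inord 3)).
  by move=> a; rewrite sum4 !inordK //= /Fr7; vring.
split.
- move=> a b.
  have [d [h1 h2 h3 h4]] := part1 (a (inord 0)) (a (inord 1)) (a (inord 2)) (a (inord 3))
     (b (inord 0)) (b (inord 1)) (b (inord 2)) (b (inord 3)).
  by exists d; rewrite !sv; split.
- by exists <<Xt>>%VS; split; [exact: memXt | exact: dimXt].
- split; first by move=> d [].
  move=> d1 d2 d3 h1 h2 h3.
  have hE := brk_TGr (erefl pi) h1.1 h2.1 h3.1.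
  have hk : brk (brk d1 d2) d3 *m k =
            cross (brk (brk d1 d2) d3 *m i) j + cross i (brk (brk d1 d2) d3 *m j).
    rewrite (TMS_Dm h1) (TMS_Dm h2) (TMS_Dm h3); exact: Lie_Dm.
  rewrite (TGr_Dm hE hk); exact: Dm_TMS.
Qed.
End Main2.

Section Fin.
Variable R : realFieldType.
Variable pi : 'M[R]_7.
Hypothesis Hpp : pi *m pi = pi.
Hypothesis psym : pi^T = pi.
Hypothesis HO : forall x y z : 'cV[R]_7,
  Omega (pi *m x) (pi *m y) ((1%:M - pi) *m z) = 0.

Lemma Im_cross (x y : 'cV[R]_7) : pi *m x = x -> pi *m y = y -> pi *m cross x y = cross x y.
Proof.
move=> hx hy.
set w := cross x y.
have H : forall z : 'cV[R]_7, innp w ((1%:M - pi) *m z) = 0.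
  by move=> z; have := HO x y z; rewrite hx hy.
have := H ((1%:M - pi) *m w).
rewrite innpC innp_mull trmxB7 trmx1 psym => /innp_self_eq0.
rewrite mulmxBl mul1mx => /eqP; rewrite subr_eq0 => /eqP hw.
by rewrite -hw.
Qed.

Lemma ker_pi (u : 'cV[R]_7) : (forall y, innp u (pi *m y) = 0) -> pi *m u = 0.
Proof.
move=> H; apply: innp_self_eq0.
by rewrite innp_mull psym mulmxA Hpp; exact: H.
Qed.

End Fin.

Unset Implicit Arguments.

Theorem mainTheorem16 (R : realFieldType) (pi : 'M[R]_7)
    (i j l : 'cV[R]_7) :
  inMS' pi ->
  inIm pi i -> inIm pi j ->
  innp i i = 1 -> innp j j = 1 -> innp i j = 0 ->
  (forall v, inIm pi v -> innp l v = 0) -> innp l l = 1 ->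
  let k := cross i j in
  let v := fun r : 'I_4 =>
    [:: l; cross i l; cross j l; cross k l]`_r in
  [/\ (forall a b : 'I_4 -> R,
         exists d : 'M[R]_7,
           [/\ inTMS' pi d,
               d *m i = \sum_(r < 4) a r *: v r,
               d *m j = \sum_(r < 4) b r *: v r &
               forall d' : 'M[R]_7,
                 inTMS' pi d' ->
                 d' *m i = \sum_(r < 4) a r *: v r ->
                 d' *m j = \sum_(r < 4) b r *: v r -> d' = d]),
      (exists U : {vspace 'M[R]_7},
         (forall d, d \in U <-> inTMS' pi d) /\ \dim U = 8%N) &
      ((forall d, inTMS' pi d -> inTGr pi d) /\
       forall d1 d2 d3, inTMS' pi d1 -> inTMS' pi d2 -> inTMS' pi d3 ->
         inTMS' pi (brk (brk d1 d2) d3))].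
Proof.
move=> [[Hpp [psym _]] HO] Hi Hj hi hj hij hlV hl.
have ppi : pi *m i = i by case: Hi => y ->; rewrite mulmxA Hpp.
have ppj : pi *m j = j by case: Hj => y ->; rewrite mulmxA Hpp.
have ppk : pi *m cross i j = cross i j by exact: Im_cross.
have imk : inIm pi (cross i j) by exists (cross i j); rewrite ppk.
have hli := hlV i Hi.
have hlj := hlV j Hj.
have hlk := hlV _ imk.
have ppl : pi *m l = 0.
  by apply: ker_pi => // y; apply: hlV; exists y.
have ppv : forall a, pi *m a = a -> pi *m cross a l = 0.
  move=> a ha; apply: ker_pi => // y.
  rewrite innp_cyc innp_cyc innpC; apply: hlV.
  exists (cross (pi *m y) a).
  by rewrite Im_cross // mulmxA Hpp.
exact: (main_packaged hi hj hij hl hli hlj hlk psym ppi ppj ppk ppl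
          (ppv _ ppi) (ppv _ ppj) (ppv _ ppk)).
Qed.
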